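(* Let $\mathscr{X}$ be a complex Banach space and $\mathscr{M}_1,\mathscr{M}_2,\mathscr{M}_3$ closed subspaces such that $\mathscr{X}=\mathscr{M}_i\oplus\mathscr{M}_j$ for all $i\neq j$. Let $V_1\colon\mathscr{M}_2\to\mathscr{M}_3$, $V_2\colon\mathscr{M}_1\to\mathscr{M}_3$, $V_3\colon\mathscr{M}_1\to\mathscr{M}_2$ be isomorphisms with $\mathscr{M}_1=\{x+V_1x:x\in\mathscr{M}_2\}$, $\mathscr{M}_2=\{x+V_2x:x\in\mathscr{M}_1\}$, $\mathscr{M}_3=\{x+V_3x:x\in\mathscr{M}_1\}$, and define $W_1,W_2,W_3\in\mathcal{B}(\mathscr{X})$ by $W_1(x_2+x_3)=V_1^{-1}x_3+V_1x_2$ ($x_2\in\mathscr{M}_2,x_3\in\mathscr{M}_3$), $W_2(x_1+x_3)=V_2^{-1}x_3+V_2x_1$ ($x_1\in\mathscr{M}_1,x_3\in\mathscr{M}_3$), $W_3(x_1+x_2)=V_3^{-1}x_2+V_3x_1$ ($x_1\in\mathscr{M}_1,x_2\in\mathscr{M}_2$). Let $\mathfrak{D}=\{\{0\},\mathscr{M}_1,\mathscr{M}_2,\mathscr{X}\}$ and $\mathfrak{T}=\{\{0\},\mathscr{M}_1,\mathscr{M}_2,\mathscr{M}_3,\mathscr{X}\}$. Then $\mathrm{Col}(\mathfrak{D})=\mathrm{Grp}(\mathrm{Alg}(\mathfrak{D}))\rtimes\mathcal{O}(\mathfrak{D})$ and $\mathrm{Col}(\mathfrak{T})=\mathrm{Grp}(\mathrm{Alg}(\mathfrak{T}))\rtimes\mathcal{O}(\mathfrak{T})$,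 where $\mathcal{O}(\mathfrak{D})=\{I,W_3\}$ and $\mathcal{O}(\mathfrak{T})=\{I,W_1,W_2,W_3,W_1W_2,W_2W_1\}$.
   Context: $\mathscr{X}=\mathscr{M}\oplus\mathscr{N}$ means $\mathscr{M}\cap\mathscr{N}=\{0\}$ and $\mathscr{M}+\mathscr{N}=\mathscr{X}$. $\mathrm{Alg}(\mathfrak{F})$ is the set of bounded operators leaving every subspace of $\mathfrak{F}$ invariant; $\mathrm{Grp}(\mathcal{A})$ is the group of invertible $S\in\mathcal{A}$ with $S^{-1}\in\mathcal{A}$. $\mathrm{Col}(\mathfrak{F})$ is the group of invertible $S\in\mathcal{B}(\mathscr{X})$ such that for every closed subspace $\mathscr{M}$: $\mathscr{M}\in\mathfrak{F}$ iff $S\mathscr{M}\in\mathfrak{F}$. For a subgroup $\mathcal{O}\subseteq\mathrm{Col}(\mathfrak{F})$, the notation $\mathrm{Col}(\mathfrak{F})=\mathrm{Grp}(\mathrm{Alg}(\mathfrak{F}))\rtimes\mathcal{O}$ means $\mathcal{O}$ is a subgroup of $\mathrm{Col}(\mathfrak{F})$ with $\mathrm{Col}(\mathfrak{F})=\{AT:A\in\mathrm{Grp}(\mathrm{Alg}(\mathfrak{F})),T\in\mathcal{O}\}$ and $\mathrm{Grp}(\mathrm{Alg}(\mathfrak{F}))\cap\mathcal{O}=\{I\}$. *)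

(* Defs.v *)
From HB Require Import structures.
From mathcomp Require Import all_boot all_order all_algebra.
From mathcomp Require Import all_classical all_reals all_analysis.
From mathcomp Require Import complex.
Import numFieldNormedType.Exports.
Local Open Scope classical_set_scope.
Local Open Scope ring_scope.

Section Defs.
Context {R : realType} {V : completeNormedModType R[i]}.

Definition closed_subspace (M : set V) : Prop :=
  [/\ closed M, M 0,
      (forall x y, M x -> M y -> M (x + y)) &
      (forall (a : R[i]) x, M x -> M (a *: x))].

Definition direct_sum (M N : set V) : Prop :=
  M `&` N = [set 0] /\ (forall z : V, exists x y, M x /\ N y /\ z = x + y).

Definition bounded_op (T : V -> V) : Prop :=
  (forall (a : R[i]) x y, T (a *: x + y) = a *: T x + T y) /\ continuous T.

Definition op_inverse (S S' : V -> V) : Prop :=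
  S \o S' = id /\ S' \o S = id.

Definition invertible_op (S : V -> V) : Prop :=
  bounded_op S /\ exists S', bounded_op S' /\ op_inverse S S'.

Definition Alg (F : set (set V)) (T : V -> V) : Prop :=
  bounded_op T /\ forall M, F M -> T @` M `<=` M.

Definition GrpAlg (F : set (set V)) (S : V -> V) : Prop :=
  Alg F S /\ exists S', Alg F S' /\ op_inverse S S'.

Definition Col (F : set (set V)) (S : V -> V) : Prop :=
  invertible_op S /\
  forall M, closed_subspace M -> (F M <-> F (S @` M)).

Definition semidirect_decomp (F : set (set V)) (O : set (V -> V)) : Prop :=
  [/\
      [/\ O `<=` Col F, O id,
        (forall T1 T2, O T1 -> O T2 -> O (T1 \o T2)) &
        (forall T, O T -> exists T', O T' /\ op_inverse T T')],
      (forall S, Col F S <-> exists A T, GrpAlg F A /\ O T /\ S = A \o T) &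
      (forall S, GrpAlg F S -> O S -> S = id)].

Definition iso_with_inv (M N : set V) (f g : V -> V) : Prop :=
  [/\ (forall (a : R[i]) x y, M x -> M y -> f (a *: x + y) = a *: f x + f y),
      {within M, continuous f}, {within N, continuous g},
      (forall x, M x -> N (f x)) /\ (forall y, N y -> M (g y)) &
      (forall x, M x -> g (f x) = x) /\ (forall y, N y -> f (g y) = y)].

End Defs.

(* Main.v *)
Require Import Defs.
From HB Require Import structures.
From mathcomp Require Import all_boot all_order all_algebra.
From mathcomp Require Import all_classical all_reals all_analysis.
From mathcomp Require Import complex.
From mathcomp Require Import ring lra.
Import numFieldNormedType.Exports.
Import Order.TTheory GRing.Theory Num.Theory.
Local Open Scope classical_set_scope.
Local Open Scope ring_scope.
Set Implicit Arguments.
Unset Strict Implicit.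
Section S.
Variables (R : realType) (V : completeNormedModType R[i]).
Definition nr (x : V) : R := complex.Re `|x|.
Lemma realC_E (z : R[i]) : 0 <= z -> z = (complex.Re z)%:C%C.
Proof. move=> /ger0_Im; case: z => a b /= ->; by []. Qed.
Lemma normE (x : V) : `|x| = (nr x)%:C%C.
Proof. exact/realC_E. Qed.
Lemma nr_ge0 x : 0 <= nr x.
Proof. by have := normr_ge0 x; rewrite normE ler0c. Qed.
Lemma nrD x y : nr (x + y) <= nr x + nr y.
Proof. by have := ler_normD x y; rewrite !normE -rmorphD /= lecR. Qed.
Lemma nrN x : nr (- x) = nr x.
Proof. by rewrite /nr normrN. Qed.
Lemma nrB x y : nr (x - y) = nr (y - x).
Proof. by rewrite -nrN opprB. Qed.
Lemma nr0 : nr 0 = 0.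
Proof. by rewrite /nr normr0. Qed.
Lemma nr_eq0 x : nr x = 0 -> x = 0.
Proof. by move=> h; apply/normr0_eq0; rewrite normE h. Qed.
Lemma normC_real (t : R) : `|t%:C%C| = `|t|%:C%C.
Proof. by rewrite normc_def /= expr0n /= addr0 sqrtr_sqr. Qed.
Lemma nrZ (t : R) x : nr (t%:C%C *: x) = `|t| * nr x.
Proof. by rewrite /nr normrZ normC_real normE /= mul0r subr0. Qed.
Lemma nr_lt (x : V) (e : R) : (`|x| < e%:C%C) = (nr x < e).
Proof. by rewrite normE ltcR. Qed.
Lemma posC (e : R[i]) : 0 < e -> 0 < complex.Re e /\ e = (complex.Re e)%:C%C.
Proof. move=> e0; have E := realC_E (ltW e0); split=> //. by move: e0; rewrite {1}E ltcR. Qed.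
End S.

Section S.
Variables (R : realType) (V : completeNormedModType R[i]).
Local Notation nr := (@nr R V).

Lemma geo_lim (u : nat -> V) (r : nat -> R) :
  (forall n m, (n <= m)%N -> nr (u m - u n) <= r n) ->
  (forall e, 0 < e -> exists n, r n < e) ->
  exists l, u @ \oo --> l /\ forall n, nr (l - u n) <= r n.
Proof.
move=> hu hr.
have cu : cvg (u @ \oo).
  apply: cauchy_cvg; apply: cauchy_exP => eps eps0.
  have [e0 Ee] := posC eps0.
  have [n hn] := hr _ e0.
  exists (u n); exists n => // m /= nm.
  rewrite -ball_normE /= Ee nr_lt nrB.
  by apply: le_lt_trans (hu _ _ nm) hn.
exists (lim (u @ \oo)); split => // n.
set l := lim _.
rewrite leNgt; apply/negP => hlt.
pose e := (nr (l - u n) - r n) / 2.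
have e0 : 0 < e by rewrite /e; lra.
have /cvgrPdist_lt/(_ (e%:C)%C) : u @ \oo --> l by [].
rewrite ltcR => /(_ e0) [N _ HN].
have := HN (maxn N n) (leq_maxl _ _); rewrite nr_lt => h1.
have h2 := hu n (maxn N n) (leq_maxr _ _).
have h3 : l - u n = (l - u (maxn N n)) + (u (maxn N n) - u n) by rewrite addrA subrK.
have := nrD (l - u (maxn N n)) (u (maxn N n) - u n); rewrite -h3.
rewrite /e in h1; lra.
Qed.

Lemma closed_lim (A : set V) (u : nat -> V) l :
  closed A -> (forall n, A (u n)) -> u @ \oo --> l -> A l.
Proof. move=> cA hA ul; apply: (closed_cvg A cA _ l ul); exact: nearW. Qed.

Lemma lip_cont (f : V -> V) (c : R) :
  (forall x y, nr (f x - f y) <= c * nr (x - y)) -> continuous f.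
Proof.
move=> hf x; apply/cvgrPdist_lt => eps eps0.
have [e0 Ee] := posC eps0.
set e := complex.Re eps in e0 Ee.
have c0 : 0 <= `|c| by [].
have cc : c <= `|c| by rewrite ler_norm.
apply/nbhs_normP; exists ((e / (`|c| + 1))%:C)%C => /=.
  by rewrite ltcR divr_gt0 //; lra.
move=> y /=; rewrite Ee !nr_lt => hy.
apply: le_lt_trans (hf x y) _.
have c1 : 0 < `|c| + 1 by lra.
have : (`|c| + 1) * nr (x - y) < e.
  by rewrite mulrC -ltr_pdivlMr.
have := nr_ge0 (x - y); nra.
Qed.

Lemma within_epsdelta (A : set V) (f : V -> V) :
  {within A, continuous f} -> forall x, A x -> forall e, 0 < e ->
  exists2 d, 0 < d & forall y, A y -> nr (x - y) < d -> nr (f x - f y) < e.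
Proof.
move=> /subspace_continuousP h x Ax e e0.
have /cvgrPdist_lt/(_ (e%:C)%C) := h x Ax.
rewrite ltcR => /(_ e0).
rewrite /within /= => /nbhs_normP [d d0 hd].
have [d0' Ed] := posC d0.
exists (complex.Re d) => // y Ay hy.
rewrite -nr_lt; apply: (hd y) => //=.
by rewrite Ed nr_lt.
Qed.

Lemma arch_geo (c e : R) : 0 < e -> exists n : nat, c / 2 ^+ n < e.
Proof.
move=> e0.
have [c0|c0] := leP c 0.
  exists 0%N; rewrite expr0 divr1; lra.
have ec : 0 < e / c by rewrite divr_gt0.
have := @near_infty_natSinv_expn_lt R (PosNum ec).
move=> [N _ HN]; exists N; have := HN N (leqnn N) => /=.
rewrite mul1r => h.
have -> : c / 2 ^+ N = c * (1 / 2 ^+ N) by rewrite mul1r.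
have E : e = c * (e / c) by rewrite mulrC divfK // gt_eqF.
by rewrite [X in _ < X]E ltr_pM2l // mul1r.
Qed.

Lemma arch_nat (x : R) : exists n : nat, x <= n%:R.
Proof.
exists (Num.truncn `|x|).+1.
have := truncnS_gt `|x|; have := ler_norm x; lra.
Qed.
End S.


Section Zid.
Variable (V : zmodType).
Lemma zid1 (x0 y z1 z2 : V) : y - (z1 - z2) = (x0 + y - z1) - (x0 - z2).
Proof. by rewrite [x0 + y]addrC [y + x0 - z1]addrAC addrKA opprK opprB addrA addrAC. Qed.
Lemma zid2 (z1 z2 p1 p2 : V) : z1 - z2 - (p1 - p2) = (z1 - p1) - (z2 - p2).
Proof. by rewrite !opprB addrACA [RHS]addrACA [- p1 + _]addrC. Qed.
End Zid.

Section Sub.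
Variables (R : realType) (V : completeNormedModType R[i]).
Implicit Types M N : set V.

Lemma sub0 M : closed_subspace M -> M 0.
Proof. by case. Qed.
Lemma subD M x y : closed_subspace M -> M x -> M y -> M (x + y).
Proof. by case=> _ _ h _; apply: h. Qed.
Lemma subZ M a x : closed_subspace M -> M x -> M (a *: x).
Proof. by case=> _ _ _ h; apply: h. Qed.
Lemma subN M x : closed_subspace M -> M x -> M (- x).
Proof. by move=> hM hx; rewrite -scaleN1r; apply: subZ. Qed.
Lemma subB M x y : closed_subspace M -> M x -> M y -> M (x - y).
Proof. by move=> hM hx hy; apply: subD => //; apply: subN. Qed.
Lemma subcl M : closed_subspace M -> closed M.
Proof. by case. Qed.

Lemma ds_uniq M N a b a' b' : closed_subspace M -> closed_subspace N ->
  direct_sum M N -> M a -> N b -> M a' -> N b' -> a + b = a' + b' -> a = a'.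
Proof.
move=> hM hN [hI _] ha hb ha' hb' e.
have : (M `&` N) (a - a').
  split; first exact: subB.
  have -> : a - a' = b' - b.
    by rewrite -[a](addrK b) e addrAC [a' + b']addrC addrK.
  exact: subB.
by rewrite hI => /= /eqP; rewrite subr_eq0 => /eqP.
Qed.

Lemma ds_inter0 M N x : direct_sum M N -> M x -> N x -> x = 0.
Proof. by move=> [hI _] h1 h2; have : (M `&` N) x by []; rewrite hI. Qed.

Lemma proj_ex M N : direct_sum M N -> exists P : V -> V, forall x, M (P x) /\ N (x - P x).
Proof.
move=> [_ h]; have : forall x, exists y, M y /\ N (x - y).
  move=> x; have [a [b [ha [hb ->]]]] := h x; exists a; split => //.
  by rewrite addrAC subrr add0r.
by move=> /choice [f hf]; exists f.
Qed.
End Sub.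

Section Proj.
Variables (R : realType) (V : completeNormedModType R[i]).
Variables (M N : set V) (P : V -> V).
Hypotheses (hM : closed_subspace M) (hN : closed_subspace N) (hMN : direct_sum M N)
  (hP : forall x, M (P x) /\ N (x - P x)).
Local Notation nr := (@nr R V).

Lemma projE a b : M a -> N b -> P (a + b) = a.
Proof.
move=> ha hb; apply: (ds_uniq hM hN hMN (proj1 (hP _)) (proj2 (hP (a + b))) ha hb).
by rewrite addrC subrK.
Qed.

Lemma projL (a : R[i]) x y : P (a *: x + y) = a *: P x + P y.
Proof.
have -> : a *: x + y = (a *: P x + P y) + (a *: (x - P x) + (y - P y)).
  by rewrite addrACA -scalerDr [P x + _]addrC [P y + _]addrC !subrK.
apply: projE.
  exact: (subD hM (subZ a hM (proj1 (hP x))) (proj1 (hP y))).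
exact: (subD hN (subZ a hN (proj2 (hP x))) (proj2 (hP y))).
Qed.

Lemma proj0 : P 0 = 0.
Proof. by have := projE (sub0 hM) (sub0 hN); rewrite addr0. Qed.
Lemma projD x y : P (x + y) = P x + P y.
Proof. by have := projL 1 x y; rewrite !scale1r. Qed.
Lemma projZ a x : P (a *: x) = a *: P x.
Proof. by have := projL a x 0; rewrite !addr0 proj0 addr0. Qed.
Lemma projN x : P (- x) = - P x.
Proof. by rewrite -scaleN1r projZ scaleN1r. Qed.
Lemma projB x y : P (x - y) = P x - P y.
Proof. by rewrite projD projN. Qed.

Definition Kset (r : R) := [set x | nr (P x) <= r /\ nr (x - P x) <= r].

Lemma baire_step : exists (n : nat) (x0 : V) (rho : R), 0 < rho /\
  forall y, nr (y - x0) < rho -> forall e, 0 < e -> exists z, Kset n%:R z /\ nr (y - z) < e.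
Proof.
apply: contrapT => H0.
have step : forall (n : nat) (x0 : V) (rho : R), 0 < rho -> exists y e,
    [/\ nr (y - x0) < rho, 0 < e & forall z, Kset n%:R z -> e <= nr (y - z)].
  move=> n x0 rho r0; apply: contrapT => hne; apply: H0; exists n, x0, rho; split => // y hy e e0.
  apply: contrapT => hne2; apply: hne; exists y, e; split => // z Kz.
  rewrite leNgt; apply/negP => lt; apply: hne2; exists z; split => //.
have : forall p : nat * (V * R), exists q : V * R, 0 < p.2.2 ->
    [/\ nr (q.1 - p.2.1) < p.2.2 / 2, 0 < q.2, q.2 <= p.2.2 / 2 &
      forall z, Kset p.1%:R z -> 2 * q.2 <= nr (q.1 - z)].
  move=> [n [x0 rho]] /=.
  have [r0|r0] := ltP 0 rho; last by exists (x0, rho) => /= h; exfalso; lra.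
  have [y [e [h1 h2 h3]]] := step n x0 (rho / 2) ltac:(lra).
  exists (y, Num.min (rho / 2) (e / 2)) => _ /=; split => //.
  - by rewrite lt_min; apply/andP; split; lra.
  - by rewrite ge_min lexx.
  - move=> z /h3 hz; have : Num.min (rho / 2) (e / 2) <= e / 2 by rewrite ge_min lexx orbT.
    lra.
move=> /choice [f hf].
pose fix c n := if n is k.+1 then f (k, c k) else ((0 : V), (1 : R)).
have cS k : c k.+1 = f (k, c k) by [].
have pos : forall n, 0 < (c n).2.
  elim=> [|k IH] /=; first lra.
  by have [] := hf (k, c k) IH.
have nest : forall n m, (n <= m)%N -> nr ((c m).1 - (c n).1) + (c m).2 <= (c n).2.
  move=> n; elim=> [|m IH].
    by rewrite leqn0 => /eqP ->; rewrite subrr nr0 add0r.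
  rewrite leq_eqVlt => /orP [/eqP <-|]; first by rewrite subrr nr0 add0r.
  rewrite ltnS => /IH h.
  have [h1 _ h3 _] := hf (m, c m) (pos m).
  rewrite cS.
  have e : (f (m, c m)).1 - (c n).1 = ((f (m, c m)).1 - (c m).1) + ((c m).1 - (c n).1).
    by rewrite addrA subrK.
  have := nrD ((f (m, c m)).1 - (c m).1) ((c m).1 - (c n).1); rewrite -e /=.
  move: h1 h3 => /= h1 h3; lra.
have decay : forall n, (c n).2 <= 1 / 2 ^+ n.
  elim=> [|k IH]; first by rewrite /= expr0 divr1.
  have [_ _ h3 _] := hf (k, c k) (pos k).
  rewrite cS; apply: (le_trans h3) => /=.
  rewrite exprS invfM mulrCA mul1r; rewrite mul1r in IH.
  by rewrite [X in _ <= X]mulrC ler_pM2r.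
have [l [_ hl]] : exists l, (fun n => (c n).1) @ \oo --> l /\
    forall n, nr (l - (c n).1) <= (c n).2.
  apply: geo_lim.
    move=> n m nm; have := nest n m nm; have := pos m; lra.
  move=> e e0; have [n hn] := arch_geo 1 e0; exists n.
  by apply: le_lt_trans hn; apply: decay.
have [k hk] := arch_nat (Num.max (nr (P l)) (nr (l - P l))).
have Kl : Kset k%:R l.
  by move: hk; rewrite ge_max => /andP [? ?]; split.
have [_ p1 _ h4] := hf (k, c k) (pos k).
have := h4 l Kl; rewrite -cS nrB.
have := hl k.+1; have := pos k.+1; lra.
Qed.

Lemma nrBle x y : nr (x - y) <= nr x + nr y.
Proof. by have := nrD x (- y); rewrite nrN. Qed.

Lemma ball0_step : exists (r rho : R), [/\ 0 < rho, 0 <= r &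
  forall y, nr y < rho -> forall e, 0 < e -> exists z, Kset r z /\ nr (y - z) < e].
Proof.
have [n [x0 [rho [r0 h]]]] := baire_step.
exists (2 * n%:R), rho; split => //.
move=> y hy e e0.
have hx0 : nr (x0 - x0) < rho by rewrite subrr nr0.
have hy' : nr ((x0 + y) - x0) < rho by rewrite addrAC subrr add0r.
have [z1 [[K1 K1'] h1]] := h _ hy' (e / 2) ltac:(lra).
have [z2 [[K2 K2'] h2]] := h _ hx0 (e / 2) ltac:(lra).
exists (z1 - z2); split; first split.
- rewrite projB; have := nrBle (P z1) (P z2); lra.
- rewrite projB zid2; have := nrBle (z1 - P z1) (z2 - P z2); lra.
- rewrite (zid1 x0); have := nrBle (x0 + y - z1) (x0 - z2); lra.
Qed.

Lemma approx_step : exists C : R, 0 <= C /\ forall y e, 0 < e ->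
  exists z, [/\ nr (P z) <= C * nr y, nr (z - P z) <= C * nr y & nr (y - z) < e].
Proof.
have [r [rho [r0 rp h]]] := ball0_step.
exists (2 * r / rho); split; first by apply: divr_ge0 => //; lra.
move=> y e e0.
have [y0|yp] := eqVneq (nr y) 0.
  exists 0; rewrite proj0 subr0 nr0 y0 mulr0 subr0; split => //.
  by rewrite (nr_eq0 y0) nr0.
have yp' : 0 < nr y by rewrite lt_def yp nr_ge0.
pose t := rho / (2 * nr y).
pose ti := 2 * nr y / rho.
have tp : 0 < t by rewrite /t divr_gt0 //; lra.
have tip : 0 < ti by rewrite /ti divr_gt0 //; lra.
have tti : ti * t = 1 by rewrite /t /ti; field; lra.
have hy : nr (t%:C%C *: y) < rho.
  rewrite nrZ gtr0_norm //.
  have -> : t * nr y = rho / 2 by rewrite /t; field; lra.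
  lra.
have [z' [[Kz1 Kz2] hz]] := h _ hy (t * e) (mulr_gt0 tp e0).
have sc : forall w : V, ti%:C%C *: (t%:C%C *: w) = w.
  by move=> w; rewrite scalerA -rmorphM /= tti scale1r.
exists (ti%:C%C *: z'); split.
- rewrite projZ nrZ gtr0_norm //.
  have -> : 2 * r / rho * nr y = ti * r by rewrite /ti; field; lra.
  by rewrite ler_pM2l.
- rewrite projZ -scalerBr nrZ gtr0_norm //.
  have -> : 2 * r / rho * nr y = ti * r by rewrite /ti; field; lra.
  by rewrite ler_pM2l.
- rewrite -{1}(sc y) -scalerBr nrZ gtr0_norm //.
  have : ti * nr (t%:C%C *: y - z') < ti * (t * e) by rewrite ltr_pM2l.
  by rewrite mulrA tti mul1r.
Qed.

Lemma small_eq0 (v : V) (c : R) : (forall n, nr v <= c / 2 ^+ n) -> v = 0.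
Proof.
move=> h; apply: nr_eq0; apply/eqP; rewrite eq_le nr_ge0 andbT.
rewrite leNgt; apply/negP => hp.
have [n hn] := arch_geo c hp.
have := h n; lra.
Qed.

Lemma proj_bound : exists C : R, 0 <= C /\ forall x, nr (P x) <= C * nr x.
Proof.
have [C [C0 hC]] := approx_step.
exists (2 * C); split; first lra.
move=> x.
have [x0|xp] := eqVneq (nr x) 0.
  by rewrite (nr_eq0 x0) proj0 !nr0 mulr0.
have al : 0 < nr x by rewrite lt_def xp nr_ge0.
set al' := nr x in al.
pose a k := al' / 2 ^+ k.
have aS k : a k.+1 = a k / 2.
  by rewrite /a exprS invfM mulrA mulrAC.
have ap k : 0 < a k by rewrite /a divr_gt0 // exprn_gt0.
have : forall p : nat * V, exists z,
    [/\ nr (P z) <= C * nr p.2, nr (z - P z) <= C * nr p.2 & nr (p.2 - z) < a p.1.+1].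
  by move=> [k w]; apply: hC.
move=> /choice [g hg].
pose fix y k := if k is j.+1 then y j + g (j, x - y j) else 0.
have yS j : y j.+1 = y j + g (j, x - y j) by [].
have inv : forall k, nr (x - y k) <= a k.
  elim=> [|j IH]; first by rewrite /= subr0 /a expr0 divr1.
  rewrite yS opprD addrA.
  by have [_ _ /= h] := hg (j, x - y j); apply: ltW.
have amono : forall n m, (n <= m)%N -> a m <= a n.
  move=> n; elim=> [|m IH]; first by rewrite leqn0 => /eqP ->.
  rewrite leq_eqVlt => /orP [/eqP <-//|]; rewrite ltnS => /IH.
  rewrite aS; have := ap m; lra.
have stepP : forall j, nr (P (y j.+1) - P (y j)) <= C * a j.
  move=> j; rewrite yS projD [P (y j) + _]addrC addrK.
  have [h _ _] := hg (j, x - y j); apply: (le_trans h).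
  by apply: ler_wpM2l => //; apply: inv.
have tele : forall n m, (n <= m)%N ->
    nr (P (y m) - P (y n)) <= 2 * C * a n - 2 * C * a m.
  move=> n; elim=> [|m IH].
    by rewrite leqn0 => /eqP ->; rewrite subrr nr0 subrr.
  rewrite leq_eqVlt => /orP [/eqP <-|]; first by rewrite subrr nr0 subrr.
  rewrite ltnS => /IH h.
  have e : P (y m.+1) - P (y n) = (P (y m.+1) - P (y m)) + (P (y m) - P (y n)).
    by rewrite addrA subrK.
  rewrite e; have := nrD (P (y m.+1) - P (y m)) (P (y m) - P (y n)).
  have := stepP m; rewrite aS; nra.
have [la [conva hla]] : exists l : V, (fun n => P (y n)) @ \oo --> l /\
    forall n, nr (l - P (y n)) <= 2 * C * a n.
  apply: geo_lim.
    move=> n m nm; have := tele n m nm; have := ap m; nra.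
  move=> e e0; have [n hn] := arch_geo (2 * C * al') e0; exists n.
  by rewrite /a mulrA.
have [ly [convy hly]] : exists l : V, y @ \oo --> l /\ forall n, nr (l - y n) <= 2 * a n.
  apply: geo_lim.
    move=> n m nm.
    have e : y m - y n = (x - y n) - (x - y m) by rewrite opprB [RHS]addrC [RHS]addrA subrK.
    rewrite e; have := nrBle (x - y n) (x - y m).
    have := inv n; have := inv m; have := amono n m nm; lra.
  move=> e e0; have [n hn] := arch_geo (2 * al') e0; exists n.
  by rewrite /a mulrA.
have lyx : ly = x.
  apply/eqP; rewrite -subr_eq0; apply/eqP; apply: (small_eq0 (c := 3 * al')) => n.
  have e : ly - x = (ly - y n) - (x - y n) by rewrite opprB addrA subrK.
  rewrite e; have := nrBle (ly - y n) (x - y n); have := hly n; have := inv n.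
  rewrite /a -!mulrA; lra.
rewrite {}lyx in convy.
have Ma : M la := closed_lim (subcl hM) (fun n => proj1 (hP (y n))) conva.
have Na : N (x - la).
  apply: (closed_lim (subcl hN) (fun n => proj2 (hP (y n)))).
  exact: cvgB.
have -> : P x = la.
  apply: (ds_uniq hM hN hMN (proj1 (hP x)) (proj2 (hP x)) Ma Na).
  by rewrite !subrKC.
have := hla 0%N; rewrite /= proj0 subr0 /a expr0 divr1; lra.
Qed.

Lemma proj_cont : continuous P.
Proof.
have [C [C0 hC]] := proj_bound.
apply: (lip_cont (c := C)) => x y.
by rewrite -projB.
Qed.

End Proj.


Section Ops.
Variables (R : realType) (V : completeNormedModType R[i]).
Implicit Types (T S A : V -> V) (F : set (set V)) (M N : set V).

Lemma bo_add T x y : bounded_op T -> T (x + y) = T x + T y.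
Proof. by case=> h _; have := h 1 x y; rewrite !scale1r. Qed.
Lemma bo0 T : bounded_op T -> T 0 = 0.
Proof. by move=> h; have := bo_add 0 0 h; rewrite addr0 => /eqP; rewrite -subr_eq subrr eq_sym => /eqP. Qed.

Lemma bo_id : bounded_op (@id V).
Proof. by split => // x; apply: cvg_id. Qed.

Lemma bo_comp T S : bounded_op T -> bounded_op S -> bounded_op (T \o S).
Proof.
move=> [lT cT] [lS cS]; split; first by move=> a x y /=; rewrite lS lT.
by move=> x; apply: continuous_comp; [apply: cS| apply: cT].
Qed.

Lemma img_inv T T' N : op_inverse T T' -> T' @` (T @` N) = N.
Proof.
move=> [_ h]; rewrite image_comp h; apply/seteqP; split => x.
  by move=> [y Ny <-].
by move=> Nx; exists x.
Qed.

Lemma img_fixP A A' N : op_inverse A A' -> A @` N `<=` N -> A' @` N `<=` N -> A @` N = N.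
Proof.
move=> [h1 h2] s1 s2; apply/seteqP; split => // y Ny.
exists (A' y); first by apply: s2; exists y.
by have := congr1 (fun f => f y) h1.
Qed.

Lemma fix_of_grp F A : GrpAlg F A -> forall N, F N -> A @` N = N /\
  exists A', Alg F A' /\ op_inverse A A'.
Proof.
move=> [[bA hA] [A' [[bA' hA'] inv]]] N FN; split; last by exists A'.
by apply: (img_fixP inv); [apply: hA | apply: hA'].
Qed.

Lemma grp_of_fix F A A' : bounded_op A -> bounded_op A' -> op_inverse A A' ->
  (forall N, F N -> A @` N = N) -> GrpAlg F A.
Proof.
move=> bA bA' inv h; split; first by split => // N /h ->.
exists A'; split => //; split => // N /h e y [x Nx <-].
rewrite -e in Nx; case: Nx => z Nz <-.
by have := congr1 (fun f => f z) (proj2 inv) => /= ->.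
Qed.

Lemma col_of F T T' : bounded_op T -> bounded_op T' -> op_inverse T T' ->
  (forall N, F N -> F (T @` N)) -> (forall N, F N -> F (T' @` N)) -> Col F T.
Proof.
move=> bT bT' inv h h'; split; first by split => //; exists T'.
move=> N _; split; first exact: h.
by move=> /h'; rewrite img_inv.
Qed.

Lemma col_comp F A T : GrpAlg F A -> Col F T -> Col F (A \o T).
Proof.
move=> gA [[bT [T' [bT' invT]]] hT].
have [[bA _] [A' [[bA' _] invA]]] := gA.
split.
  split; first exact: bo_comp.
  exists (T' \o A'); split; first exact: bo_comp.
  case: invT => t1 t2; case: invA => a1 a2; split.
    by rewrite -compA (compA T) t1 compA a1.
  by rewrite -compA (compA A') a2 compA t2.
move=> N cN; rewrite -image_comp; rewrite (hT N cN); split.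
  by move=> FT; have [-> _] := fix_of_grp gA FT.
move=> FA.
have [e [A'' [hA'' invA'']]] := fix_of_grp gA FA.
have : A'' @` (A @` (T @` N)) = T @` N by apply: img_inv.
have fixA'' : A'' @` (A @` (T @` N)) = A @` (T @` N).
  apply: (img_fixP (A' := A)).
  - by case: invA'' => ? ?; split.
  - by apply: (proj2 hA'').
  - by case: gA => [[_ hA] _]; apply: hA.
by rewrite fixA'' => <-.
Qed.

Lemma comp_within (M : set V) (f g : V -> V) : continuous g -> (forall x, M (g x)) ->
  {within M, continuous f} -> continuous (f \o g).
Proof.
move=> cg Mg cf x; apply/cvgrPdist_lt => eps eps0.
have [e0 Ee] := posC eps0.
have [d d0 hd] := within_epsdelta cf (Mg x) e0.
have := cg x; move/cvgrPdist_lt/(_ (d%:C)%C); rewrite ltcR => /(_ d0).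
apply: filterS => y; rewrite nr_lt => hy.
by rewrite Ee nr_lt /=; apply: hd.
Qed.

Lemma iso_inv_lin M N f g : closed_subspace M -> closed_subspace N ->
  iso_with_inv M N f g -> forall a y y', N y -> N y' -> g (a *: y + y') = a *: g y + g y'.
Proof.
move=> hM hN [lf _ _ [mf mg] [gf fg]] a y y' Ny Ny'.
have Mz : M (a *: g y + g y') := subD hM (subZ a hM (mg _ Ny)) (mg _ Ny').
by rewrite -(gf _ Mz) (lf _ _ _ (mg _ Ny) (mg _ Ny')) (fg _ Ny) (fg _ Ny').
Qed.

Lemma bo_from_proj M N f g W : closed_subspace M -> closed_subspace N -> direct_sum M N ->
  (forall (a : R[i]) x y, M x -> M y -> f (a *: x + y) = a *: f x + f y) ->
  (forall (a : R[i]) x y, N x -> N y -> g (a *: x + y) = a *: g x + g y) ->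
  {within M, continuous f} -> {within N, continuous g} ->
  (forall x y, M x -> N y -> W (x + y) = g y + f x) -> bounded_op W.
Proof.
move=> hM hN hMN lf lg cf cg hW.
have [P hP] := proj_ex hMN.
have WE' : forall x, W x = g (x - P x) + f (P x).
  by move=> x; rewrite -{1}(subrKC (P x) x) hW //; case: (hP x).
have WE : W = (g \o (fun x => x - P x)) + (f \o P) by apply: funext => x; rewrite WE'.
split.
  move=> a x y; rewrite !WE'.
  rewrite (projL hM hN hMN hP) lf; try by case: (hP x); case: (hP y).
  have -> : a *: x + y - (a *: P x + P y) = a *: (x - P x) + (y - P y).
    by rewrite scalerBr opprD addrACA.
  rewrite lg; try by case: (hP x); case: (hP y).
  by rewrite scalerDr addrACA.
rewrite WE => x; apply: continuousD.
  apply: (comp_within (M := N)) => //; last by move=> z; case: (hP z).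
  by move=> z; apply: continuousB; [apply: cvg_id | apply: (proj_cont hM hN hMN hP)].
apply: (comp_within (M := M)) => //; last by move=> z; case: (hP z).
exact: (proj_cont hM hN hMN hP).
Qed.

End Ops.


Inductive idx := I1 | I2 | I3.
Lemma idx_dec (i j : idx) : {i = j} + {i <> j}.
Proof. decide equality. Qed.

Definition third i j := match i, j with
  | I1, I2 | I2, I1 => I3 | I1, I3 | I3, I1 => I2 | _, _ => I1 end.

Lemma inj_surj (s : idx -> idx) : (forall i j, s i = s j -> i = j) -> forall j, exists i, s i = j.
Proof.
move=> hs j.
case E1 : (s I1); case E2 : (s I2); case E3 : (s I3);
  try (by have := hs I1 I2 (etrans E1 (esym E2)));
  try (by have := hs I1 I3 (etrans E1 (esym E3)));
  try (by have := hs I2 I3 (etrans E2 (esym E3)));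
  case: j; by [exists I1 | exists I2 | exists I3].
Qed.

Section Main.
Variables (R : realType) (V : completeNormedModType R[i]) (M1 M2 M3 : set V)
  (V1 U1 V2 U2 V3 U3 W1 W2 W3 : V -> V).
Hypotheses (c1 : closed_subspace M1) (c2 : closed_subspace M2) (c3 : closed_subspace M3)
  (d12 : direct_sum M1 M2) (d21 : direct_sum M2 M1)
  (d13 : direct_sum M1 M3) (d31 : direct_sum M3 M1)
  (d23 : direct_sum M2 M3) (d32 : direct_sum M3 M2)
  (i1 : iso_with_inv M2 M3 V1 U1) (i2 : iso_with_inv M1 M3 V2 U2)
  (i3 : iso_with_inv M1 M2 V3 U3)
  (e1 : M1 = [set x + V1 x | x in M2]) (e2 : M2 = [set x + V2 x | x in M1])
  (e3 : M3 = [set x + V3 x | x in M1])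
  (w1 : forall x2 x3, M2 x2 -> M3 x3 -> W1 (x2 + x3) = U1 x3 + V1 x2)
  (w2 : forall x1 x3, M1 x1 -> M3 x3 -> W2 (x1 + x3) = U2 x3 + V2 x1)
  (w3 : forall x1 x2, M1 x1 -> M2 x2 -> W3 (x1 + x2) = U3 x2 + V3 x1).

Definition Mi i := match i with I1 => M1 | I2 => M2 | I3 => M3 end.
Definition phi i j : V -> V := match i, j with
  | I1, I2 => V3 | I2, I1 => U3 | I2, I3 => V1 | I3, I2 => U1
  | I1, I3 => V2 | I3, I1 => U2 | _, _ => id end.

Lemma cs i : closed_subspace (Mi i). Proof. by case: i. Qed.
Lemma ds i j : i <> j -> direct_sum (Mi i) (Mi j).
Proof. by case: i; case: j. Qed.
Lemma phi_ii i x : phi i i x = x. Proof. by case: i. Qed.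

Lemma iso_mem (M N : set V) (f g : V -> V) : iso_with_inv M N f g ->
  (forall x, M x -> N (f x)) /\ (forall y, N y -> M (g y)).
Proof. by case. Qed.
Lemma iso_gf (M N : set V) (f g : V -> V) : iso_with_inv M N f g -> forall x, M x -> g (f x) = x.
Proof. by case=> _ _ _ _ []. Qed.
Lemma iso_fg (M N : set V) (f g : V -> V) : iso_with_inv M N f g -> forall y, N y -> f (g y) = y.
Proof. by case=> _ _ _ _ []. Qed.

Lemma phi_mem i j x : Mi i x -> Mi j (phi i j x).
Proof.
case: i; case: j => //= h;
  by [apply: (proj1 (iso_mem i1)) | apply: (proj2 (iso_mem i1))
     |apply: (proj1 (iso_mem i2)) | apply: (proj2 (iso_mem i2))
     |apply: (proj1 (iso_mem i3)) | apply: (proj2 (iso_mem i3))].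
Qed.

Lemma phi_sum i j x : i <> j -> Mi i x -> Mi (third i j) (x + phi i j x).
Proof.
case: i; case: j => //= _ h.
- by rewrite e3; exists x.
- by rewrite e2; exists x.
- by rewrite e3; exists (U3 x); [apply: (proj2 (iso_mem i3)) | rewrite (iso_fg i3) // addrC].
- by rewrite e1; exists x.
- by rewrite e2; exists (U2 x); [apply: (proj2 (iso_mem i2)) | rewrite (iso_fg i2) // addrC].
- by rewrite e1; exists (U1 x); [apply: (proj2 (iso_mem i1)) | rewrite (iso_fg i1) // addrC].
Qed.

Lemma third_sym i j : third i j = third j i. Proof. by case: i; case: j. Qed.
Lemma third_ne i j : i <> j -> j <> third i j /\ i <> third i j.
Proof. by case: i; case: j. Qed.

Lemma third_cyc i j k : i <> j -> j <> k -> i <> k -> [/\ third j k = i, third i k = j & third i j = k].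
Proof. by case: i; case: j; case: k. Qed.

Lemma phi_uniq i j x y : i <> j -> Mi i x -> Mi j y -> Mi (third i j) (x + y) ->
  y = phi i j x.
Proof.
move=> ij Mx My Ms.
have [jt _] := third_ne ij.
have h := ds_inter0 (ds jt) (subB (cs j) My (phi_mem j Mx)) _.
apply/eqP; rewrite -subr_eq0; apply/eqP; apply: h.
have -> : y - phi i j x = (x + y) - (x + phi i j x) by rewrite [x + y]addrC addrKA.
by apply: subB; [apply: cs | | apply: phi_sum].
Qed.

Lemma phi_inv i j x : i <> j -> Mi i x -> phi j i (phi i j x) = x.
Proof.
move=> ij Mx; apply/esym/phi_uniq => //; first by move=> h; apply: ij.
- exact: phi_mem.
- by rewrite third_sym addrC; apply: phi_sum.
Qed.

Lemma phi_cyc i j k x : i <> j -> j <> k -> i <> k -> Mi i x ->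
  phi j k (phi i j x) = phi i k x.
Proof.
move=> ij jk ik Mx.
have [t1 t2 t0] := third_cyc ij jk ik.
have s1 : Mi k (- (x + phi i j x)).
  by apply: subN; [apply: cs|]; move: (phi_sum ij Mx); rewrite t0.
have -> : phi j k (phi i j x) = - (x + phi i j x).
  apply/esym/phi_uniq => //; first exact: phi_mem.
  by rewrite t1 opprD addrCA subrr addr0; apply: subN => //; apply: cs.
apply/phi_uniq => //.
by rewrite t2 opprD addrA subrr add0r; apply: subN; [apply: cs | apply: phi_mem].
Qed.

Lemma phi_comp i j k x : Mi i x -> phi j k (phi i j x) = phi i k x.
Proof.
move=> Mx.
have [<-|ij] := idx_dec i j; first by rewrite phi_ii.
have [<-|jk] := idx_dec j k; first by rewrite phi_ii.
have [ek|ik] := idx_dec i k; first by rewrite -ek phi_ii phi_inv.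
exact: phi_cyc.
Qed.

Definition canon (s : idx -> idx) (T : V -> V) := forall i x, Mi i x -> T x = phi i (s i) x.

Lemma canon_comp s t T S : canon s T -> canon t S -> canon (s \o t) (T \o S).
Proof.
move=> hT hS i x Mx /=; rewrite (hS _ _ Mx) (hT (t i)); last exact: phi_mem.
exact: phi_comp.
Qed.

Lemma canon_uniq s t T S : (forall i, s i = t i) -> canon s T -> canon t S ->
  bounded_op T -> bounded_op S -> T = S.
Proof.
move=> st hT hS bT bS; apply: funext => z.
have [_ /(_ z) [a [b [Ma [Mb ->]]]]] := d12.
rewrite !bo_add // (hT I1) // (hT I2) // (hS I1) // (hS I2) //.
by rewrite !st.
Qed.

Lemma canon_img s T i : canon s T -> T @` Mi i = Mi (s i).
Proof.
move=> hT; apply/seteqP; split => y.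
  by move=> [x Mx <-]; rewrite (hT _ _ Mx); apply: phi_mem.
move=> My; exists (phi (s i) i y); first exact: phi_mem.
by rewrite (hT i) ?phi_comp ?phi_ii //; apply: phi_mem.
Qed.


Lemma iso0 (M N : set V) (f g : V -> V) : closed_subspace M -> closed_subspace N ->
  iso_with_inv M N f g -> f 0 = 0 /\ g 0 = 0.
Proof.
move=> hM hN iso; have [lf _ _ _ _] := iso.
have h := lf 1 0 0 (sub0 hM) (sub0 hM).
rewrite !scale1r addr0 in h.
have f0 : f 0 = 0 by move/eqP: h; rewrite -subr_eq subrr eq_sym => /eqP.
split => //; rewrite -{1}f0 (iso_gf iso) //; exact: sub0.
Qed.

Definition s1 i := match i with I1 => I1 | I2 => I3 | I3 => I2 end.
Definition s2 i := match i with I1 => I3 | I2 => I2 | I3 => I1 end.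
Definition s3 i := match i with I1 => I2 | I2 => I1 | I3 => I3 end.

Lemma canon_ext s t T : (forall i, s i = t i) -> canon s T -> canon t T.
Proof. by move=> st hT i x Mx; rewrite -st; apply: hT. Qed.

Lemma canon_id : canon (fun i => i) id.
Proof. by move=> i x _; rewrite phi_ii. Qed.

Lemma canon_W1 : canon s1 W1.
Proof.
have [V10 U10] := iso0 c2 c3 i1.
case => x /= Mx.
- move: Mx; rewrite e1 => -[a Ma <-].
  by rewrite w1 // ?(iso_gf i1) //; apply: (proj1 (iso_mem i1)).
- have -> : W1 x = W1 (x + 0) by rewrite addr0.
  by rewrite w1 // ?U10 ?add0r //; apply: sub0.
- have -> : W1 x = W1 (0 + x) by rewrite add0r.
  by rewrite w1 // ?V10 ?addr0 //; apply: sub0.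
Qed.

Lemma canon_W2 : canon s2 W2.
Proof.
have [V20 U20] := iso0 c1 c3 i2.
case => x /= Mx.
- have -> : W2 x = W2 (x + 0) by rewrite addr0.
  by rewrite w2 // ?U20 ?add0r //; apply: sub0.
- move: Mx; rewrite e2 => -[a Ma <-].
  by rewrite w2 // ?(iso_gf i2) //; apply: (proj1 (iso_mem i2)).
- have -> : W2 x = W2 (0 + x) by rewrite add0r.
  by rewrite w2 // ?V20 ?addr0 //; apply: sub0.
Qed.

Lemma canon_W3 : canon s3 W3.
Proof.
have [V30 U30] := iso0 c1 c2 i3.
case => x /= Mx.
- have -> : W3 x = W3 (x + 0) by rewrite addr0.
  by rewrite w3 // ?U30 ?add0r //; apply: sub0.
- have -> : W3 x = W3 (0 + x) by rewrite add0r.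
  by rewrite w3 // ?V30 ?addr0 //; apply: sub0.
- move: Mx; rewrite e3 => -[a Ma <-].
  by rewrite w3 // ?(iso_gf i3) //; apply: (proj1 (iso_mem i3)).
Qed.

Lemma bW1 : bounded_op W1.
Proof.
have [lf cf cg _ _] := i1.
exact: (bo_from_proj c2 c3 d23 lf (iso_inv_lin c2 c3 i1) cf cg w1).
Qed.
Lemma bW2 : bounded_op W2.
Proof.
have [lf cf cg _ _] := i2.
exact: (bo_from_proj c1 c3 d13 lf (iso_inv_lin c1 c3 i2) cf cg w2).
Qed.
Lemma bW3 : bounded_op W3.
Proof.
have [lf cf cg _ _] := i3.
exact: (bo_from_proj c1 c2 d12 lf (iso_inv_lin c1 c2 i3) cf cg w3).
Qed.

Definition OD := [set S : V -> V | S = id \/ S = W3].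
Definition OT := [set S : V -> V | S = id \/ S = W1 \/ S = W2 \/ S = W3 \/
             S = W1 \o W2 \/ S = W2 \o W1].
Definition Dfam := [set N : set V | N = [set 0] \/ N = M1 \/ N = M2 \/ N = setT].
Definition Tfam := [set N : set V | N = [set 0] \/ N = M1 \/ N = M2 \/ N = M3 \/ N = setT].

Definition injS (s : idx -> idx) := forall i j, s i = s j -> i = j.

Lemma OT_info T : OT T -> exists s, [/\ canon s T, bounded_op T & injS s].
Proof.
case=> [->|[->|[->|[->|[->|->]]]]].
- by exists (fun i => i); split; [exact: canon_id | exact: bo_id |].
- by exists s1; split; [exact: canon_W1 | exact: bW1 | case; case].
- by exists s2; split; [exact: canon_W2 | exact: bW2 | case; case].
- by exists s3; split; [exact: canon_W3 | exact: bW3 | case; case].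
- exists (s1 \o s2); split; [exact: canon_comp canon_W1 canon_W2 | exact: bo_comp bW1 bW2 |].
  by case; case.
- exists (s2 \o s1); split; [exact: canon_comp canon_W2 canon_W1 | exact: bo_comp bW2 bW1 |].
  by case; case.
Qed.

Lemma inv_pair s t T S : canon s T -> canon t S -> bounded_op T -> bounded_op S ->
  (forall i, s (t i) = i) -> (forall i, t (s i) = i) -> op_inverse T S.
Proof.
move=> cT cS bT bS st ts; split.
  apply: (canon_uniq (s := s \o t) (t := fun i => i)) => //.
  - exact: canon_comp.
  - exact: canon_id.
  - exact: bo_comp.
  - exact: bo_id.
apply: (canon_uniq (s := t \o s) (t := fun i => i)) => //.
- exact: canon_comp.
- exact: canon_id.
- exact: bo_comp.
- exact: bo_id.
Qed.

Lemma OT_inv T : OT T -> exists T', OT T' /\ op_inverse T T'.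
Proof.
have c12 := canon_comp canon_W1 canon_W2; have c21 := canon_comp canon_W2 canon_W1.
have b12 := bo_comp bW1 bW2; have b21 := bo_comp bW2 bW1.
case=> [->|[->|[->|[->|[->|->]]]]].
- by exists id; split; [left | apply: (inv_pair canon_id canon_id (bo_id V) (bo_id V))].
- by exists W1; split; [right; left | apply: (inv_pair canon_W1 canon_W1 bW1 bW1); case].
- by exists W2; split; [right; right; left | apply: (inv_pair canon_W2 canon_W2 bW2 bW2); case].
- by exists W3; split; [right; right; right; left | apply: (inv_pair canon_W3 canon_W3 bW3 bW3); case].
- by exists (W2 \o W1); split; [right; right; right; right; right | apply: (inv_pair c12 c21 b12 b21); case].
- by exists (W1 \o W2); split; [right; right; right; right; left | apply: (inv_pair c21 c12 b21 b12); case].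
Qed.

Lemma canon_OT s : injS s -> exists T, OT T /\ canon s T.
Proof.
move=> hs.
have c12 := canon_comp canon_W1 canon_W2; have c21 := canon_comp canon_W2 canon_W1.
case E1 : (s I1); case E2 : (s I2); case E3 : (s I3);
  try (by have := hs I1 I2 (etrans E1 (esym E2)));
  try (by have := hs I1 I3 (etrans E1 (esym E3)));
  try (by have := hs I2 I3 (etrans E2 (esym E3)));
  first
  [ (exists id; split; [by left | apply: (canon_ext _ canon_id); by case => /=; rewrite ?E1 ?E2 ?E3])
  | (exists W1; split; [by right; left | apply: (canon_ext _ canon_W1); by case => /=; rewrite ?E1 ?E2 ?E3])
  | (exists W2; split; [by right; right; left | apply: (canon_ext _ canon_W2); by case => /=; rewrite ?E1 ?E2 ?E3])
  | (exists W3; split; [by right; right; right; left | apply: (canon_ext _ canon_W3); by case => /=; rewrite ?E1 ?E2 ?E3])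
  | (exists (W1 \o W2); split; [by right; right; right; right; left | apply: (canon_ext _ c12); by case => /=; rewrite ?E1 ?E2 ?E3])
  | (exists (W2 \o W1); split; [by right; right; right; right; right | apply: (canon_ext _ c21); by case => /=; rewrite ?E1 ?E2 ?E3]) ].
Qed.

Lemma OT_comp T1 T2 : OT T1 -> OT T2 -> OT (T1 \o T2).
Proof.
move=> /OT_info [s [cs1 b1 is1]] /OT_info [t [ct b2 it]].
have ist : injS (s \o t) by move=> i j /= /is1 /it.
have [T [OTT cT]] := canon_OT ist.
have -> : T1 \o T2 = T; last by [].
apply: (canon_uniq (s := s \o t) (t := s \o t)) => //.
- exact: canon_comp.
- exact: bo_comp.
- by have [s' [_ bT _]] := OT_info OTT.
Qed.


Lemma img0 (T : V -> V) : bounded_op T -> T @` [set 0] = [set 0].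
Proof.
move=> bT; apply/seteqP; split => y.
  by move=> [x /= -> <-]; rewrite bo0.
by move=> /= ->; exists 0 => //; rewrite bo0.
Qed.

Lemma imgT (T T' : V -> V) : op_inverse T T' -> T @` setT = setT.
Proof.
move=> [h _]; apply/seteqP; split => // y _; exists (T' y) => //.
by have := congr1 (fun f => f y) h.
Qed.

Lemma inv_comp (A A' B B' : V -> V) : op_inverse A A' -> op_inverse B B' ->
  op_inverse (A \o B) (B' \o A').
Proof.
case=> a1 a2 [b1 b2]; split.
  by rewrite -compA (compA B) b1 compA a1.
by rewrite -compA (compA A') a2 compA b2.
Qed.

Lemma Tfam_Mi j : Tfam (Mi j).
Proof. by case: j; rewrite /Tfam /=; tauto. Qed.

Lemma triv_aux j k l : j <> k -> j <> l -> k <> l ->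
  (forall y, Mi j y -> y = 0) -> forall z : V, z = 0.
Proof.
move=> jk jl kl h z.
have [_ /(_ z) [a [b [Ma [Mb E]]]]] := ds jk.
have [_ /(_ z) [a' [b' [Ma' [Mb' E']]]]] := ds jl.
rewrite (h _ Ma) add0r in E; rewrite (h _ Ma') add0r in E'.
apply: (ds_inter0 (ds kl)); by [rewrite E | rewrite E'].
Qed.

Lemma triv_of j : (forall y, Mi j y -> y = 0) -> forall z : V, z = 0.
Proof.
case: j => h.
- by apply: (triv_aux (j := I1) (k := I2) (l := I3)).
- by apply: (triv_aux (j := I2) (k := I1) (l := I3)).
- by apply: (triv_aux (j := I3) (k := I1) (l := I2)).
Qed.

Lemma sub_triv i j : i <> j -> Mi j `<=` Mi i -> forall z : V, z = 0.
Proof.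
move=> ij hs; apply: (triv_of (j := j)) => y My.
exact: (ds_inter0 (ds ij) (hs _ My) My).
Qed.

Lemma Mi_inj i j : (exists z : V, z <> 0) -> Mi i = Mi j -> i = j.
Proof.
move=> [z nz] e; have [//|ij] := idx_dec i j.
by exfalso; apply: nz; apply: (sub_triv ij); rewrite e.
Qed.

Lemma img_good (S S' : V -> V) i : (exists z : V, z <> 0) -> bounded_op S -> bounded_op S' ->
  op_inverse S S' -> S @` Mi i <> [set 0] /\ S @` Mi i <> setT.
Proof.
move=> [z nz] bS bS' inv; split => h.
  apply: nz; apply: (triv_of (j := i)) => y My.
  have : (S @` Mi i) (S y) by exists y.
  rewrite h /= => Sy0.
  by have := congr1 (fun f => f y) (proj2 inv); rewrite /= Sy0 bo0.
have allM : forall w, Mi i w.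
  move=> w; have : (S @` Mi i) (S w) by rewrite h.
  move=> [m Mm Sm].
  have SS : forall a, S' (S a) = a := fun a => congr1 (fun f => f a) (proj2 inv).
  by rewrite -(SS w) -Sm SS.
have [j ij] : exists j, i <> j by case: i {h allM}; [exists I2|exists I1|exists I1].
by apply: nz; apply: (sub_triv ij) => w _; apply: allM.
Qed.

Lemma grp_id (F : set (set V)) : GrpAlg F id.
Proof.
apply: (grp_of_fix (A' := id)) => //; [exact: bo_id | exact: bo_id |].
by move=> N _; rewrite image_id.
Qed.

Lemma famT_img T : OT T -> forall N, Tfam N -> Tfam (T @` N).
Proof.
move=> OTT N.
have [s [cT bT _]] := OT_info OTT.
have [T' [_ inv]] := OT_inv OTT.
case=> [->|[->|[->|[->|->]]]].
- by rewrite img0 //; left.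
- by have := canon_img I1 cT; rewrite /= => ->; apply: Tfam_Mi.
- by have := canon_img I2 cT; rewrite /= => ->; apply: Tfam_Mi.
- by have := canon_img I3 cT; rewrite /= => ->; apply: Tfam_Mi.
- by rewrite (imgT inv); right; right; right; right.
Qed.

Lemma OT_col T : OT T -> Col Tfam T.
Proof.
move=> OTT.
have [s [cT bT _]] := OT_info OTT.
have [T' [OTT' inv]] := OT_inv OTT.
have [s' [_ bT' _]] := OT_info OTT'.
by apply: (col_of bT bT' inv); apply: famT_img.
Qed.

Lemma main_T : semidirect_decomp Tfam OT.
Proof.
split.
- split.
  + exact: OT_col.
  + by left.
  + exact: OT_comp.
  + exact: OT_inv.
- move=> S; split; last first.
    move=> [A [T [gA [OTT ->]]]]; exact: (col_comp gA (OT_col OTT)).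
  move=> [[bS [S' [bS' invS]]] hS].
  have [triv|nt] := pselect (forall z : V, z = 0).
    have -> : S = id by apply: funext => z; rewrite [S z]triv [RHS]triv.
    by exists id, id; split; [apply: grp_id | split; [left|]].
  have nt' : exists z : V, z <> 0.
    by apply: contrapT => h; apply: nt => z; apply: contrapT => hz; apply: h; exists z.
  have img : forall i, exists j, S @` Mi i = Mi j.
    move=> i; have [g0 gT] := img_good i nt' bS bS' invS.
    have := (hS (Mi i) (cs i)).1 (Tfam_Mi i).
    case=> [h|[h|[h|[h|h]]]]; [by case: (g0 h) | by exists I1 | by exists I2
      | by exists I3 | by case: (gT h)].
  have [j1 h1] := img I1; have [j2 h2] := img I2; have [j3 h3] := img I3.
  pose s i := match i with I1 => j1 | I2 => j2 | I3 => j3 end.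
  have hs : forall i, S @` Mi i = Mi (s i) by case.
  have inj : injS s.
    move=> i k e; apply: (Mi_inj nt').
    by rewrite -(img_inv (Mi i) invS) -(img_inv (Mi k) invS) !hs e.
  have [T [OTT cT]] := canon_OT inj.
  have [T' [OTT' invT]] := OT_inv OTT.
  have [_ [_ bT _]] := OT_info OTT; have [_ [_ bT' _]] := OT_info OTT'.
  exists (S \o T'), T; split; last split => //.
    have invT' : op_inverse T' T by case: invT.
    have invA := inv_comp invS invT'.
    apply: (grp_of_fix (A' := T \o S')) => //; [exact: bo_comp | exact: bo_comp |].
    have fixM : forall j, (S \o T') @` Mi j = Mi j.
      move=> j; have [i <-] := inj_surj inj j.
      rewrite -image_comp.
      have -> : T' @` Mi (s i) = Mi i by rewrite -(canon_img i cT) img_inv.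
      exact: hs.
    move=> N; case=> [->|[->|[->|[->|->]]]].
    - exact: img0 (bo_comp bS bT').
    - exact: (fixM I1).
    - exact: (fixM I2).
    - exact: (fixM I3).
    - exact: imgT invA.
  by apply: funext => z /=; have := congr1 (fun f => f z) (proj2 invT) => /= ->.
- move=> S gS OS.
  have [s [cS bS _]] := OT_info OS.
  have [[_ hA] _] := gS.
  have moved : forall i, s i <> i -> S = id.
    move=> i ne; have sub : Mi (s i) `<=` Mi i.
      by rewrite -(canon_img i cS); apply: hA; apply: Tfam_Mi.
    have triv := sub_triv (nesym ne) sub.
    by apply: funext => z; rewrite [S z]triv [RHS]triv.
  have [e1'|] := idx_dec (s I1) I1; last by apply: moved.
  have [e2'|] := idx_dec (s I2) I2; last by apply: moved.
  have [e3'|] := idx_dec (s I3) I3; last by apply: moved.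
  apply: (canon_uniq (s := s) (t := fun i => i)) => //; first by case.
  + exact: canon_id.
  + exact: bo_id.
Qed.


Lemma inv33 : op_inverse W3 W3.
Proof. by apply: (inv_pair canon_W3 canon_W3 bW3 bW3); case. Qed.

Lemma W3M1 : W3 @` M1 = M2.
Proof. exact: (canon_img I1 canon_W3). Qed.
Lemma W3M2 : W3 @` M2 = M1.
Proof. exact: (canon_img I2 canon_W3). Qed.

Lemma famD_img T : OD T -> forall N, Dfam N -> Dfam (T @` N).
Proof.
case=> ->; first by move=> N; rewrite image_id.
move=> N; case=> [->|[->|[->|->]]].
- by rewrite img0; [left | exact: bW3].
- by rewrite W3M1; right; right; left.
- by rewrite W3M2; right; left.
- by rewrite (imgT inv33); right; right; right.
Qed.

Lemma OD_col T : OD T -> Col Dfam T.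
Proof.
move=> OT'; have famT := famD_img OT'.
case: OT' famT => -> famT.
- by apply: (col_of (bo_id V) (bo_id V)) => //; split.
- exact: (col_of bW3 bW3 inv33).
Qed.

Lemma main_D : semidirect_decomp Dfam OD.
Proof.
split.
- split.
  + exact: OD_col.
  + by left.
  + move=> T1 T2 [->|->] [->|->]; [by left | by right | by right |].
    by left; apply: (proj1 inv33).
  + by move=> T [->|->]; [exists id; split; [left|] | exists W3; split; [right|exact: inv33]].
- move=> S; split; last first.
    move=> [A [T [gA [OTT ->]]]]; exact: (col_comp gA (OD_col OTT)).
  move=> [[bS [S' [bS' invS]]] hS].
  have [triv|nt] := pselect (forall z : V, z = 0).
    have -> : S = id by apply: funext => z; rewrite [S z]triv [RHS]triv.
    by exists id, id; split; [apply: grp_id | split; [left|]].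
  have nt' : exists z : V, z <> 0.
    by apply: contrapT => h; apply: nt => z; apply: contrapT => hz; apply: h; exists z.
  have [g01 gT1] := img_good I1 nt' bS bS' invS.
  have [g02 gT2] := img_good I2 nt' bS bS' invS.
  have D1 : Dfam M1 by right; left.
  have D2 : Dfam M2 by right; right; left.
  have bad : S @` M1 = S @` M2 -> False.
    move=> e; have : Mi I1 = Mi I2.
      by rewrite /= -(img_inv M1 invS) -(img_inv M2 invS) e.
    by move/(Mi_inj nt').
  have := (hS M1 c1).1 D1; case=> [h1|[h1|[h1|h1]]]; [by case: (g01 h1) | | | by case: (gT1 h1)];
  (have := (hS M2 c2).1 D2; case=> [h2|[h2|[h2|h2]]]; [by case: (g02 h2) | | | by case: (gT2 h2)]);
  try (by exfalso; apply: bad; rewrite h1 h2).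
  + exists S, id; split; last split; [|by left|by []].
    apply: (grp_of_fix bS bS' invS) => N; case=> [->|[->|[->|->]]] //.
    * exact: img0.
    * exact: imgT invS.
  + exists (S \o W3), W3; split; last split; [|by right|].
    * apply: (grp_of_fix (A' := W3 \o S')); [exact: bo_comp bS bW3 | exact: bo_comp bW3 bS'
        | exact: inv_comp invS inv33 |].
      move=> N; case=> [->|[->|[->|->]]].
      -- exact: img0 (bo_comp bS bW3).
      -- by rewrite -image_comp W3M1.
      -- by rewrite -image_comp W3M2.
      -- exact: imgT (inv_comp invS inv33).
    * by apply: funext => z /=; have := congr1 (fun f => f z) (proj1 inv33) => /= ->.
- move=> S gS [->//|E].
  rewrite E in gS.
  have [[_ hA] _] := gS.
  have sub : Mi I2 `<=` Mi I1.
    by rewrite /= -W3M1; apply: hA; right; left.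
  have triv := sub_triv (i := I1) (j := I2) (fun h => ltac:(discriminate)) sub.
  by rewrite E; apply: funext => z; rewrite [W3 z]triv [RHS]triv.
Qed.

Theorem main_thm : semidirect_decomp Dfam OD /\ semidirect_decomp Tfam OT.
Proof. by split; [exact: main_D | exact: main_T]. Qed.

End Main.


Theorem theorem5p4 (R : realType) (V : completeNormedModType R[i])
  (M1 M2 M3 : set V)
  (V1 U1 V2 U2 V3 U3 W1 W2 W3 : V -> V) :
  closed_subspace M1 -> closed_subspace M2 -> closed_subspace M3 ->
  direct_sum M1 M2 -> direct_sum M2 M1 ->
  direct_sum M1 M3 -> direct_sum M3 M1 ->
  direct_sum M2 M3 -> direct_sum M3 M2 ->
  iso_with_inv M2 M3 V1 U1 ->
  iso_with_inv M1 M3 V2 U2 ->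
  iso_with_inv M1 M2 V3 U3 ->
  M1 = [set x + V1 x | x in M2] ->
  M2 = [set x + V2 x | x in M1] ->
  M3 = [set x + V3 x | x in M1] ->
  (forall x2 x3, M2 x2 -> M3 x3 -> W1 (x2 + x3) = U1 x3 + V1 x2) ->
  (forall x1 x3, M1 x1 -> M3 x3 -> W2 (x1 + x3) = U2 x3 + V2 x1) ->
  (forall x1 x2, M1 x1 -> M2 x2 -> W3 (x1 + x2) = U3 x2 + V3 x1) ->
  let D : set (set V) :=
    [set N | N = [set 0] \/ N = M1 \/ N = M2 \/ N = setT] in
  let T : set (set V) :=
    [set N | N = [set 0] \/ N = M1 \/ N = M2 \/ N = M3 \/ N = setT] in
  semidirect_decomp D [set S | S = id \/ S = W3] /\
  semidirect_decomp T
    [set S | S = id \/ S = W1 \/ S = W2 \/ S = W3 \/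
             S = W1 \o W2 \/ S = W2 \o W1].
Proof.
move=> c1 c2 c3 d12 d21 d13 d31 d23 d32 i1 i2 i3 e1 e2 e3 w1 w2 w3 D T.
exact: (main_thm c1 c2 c3 d12 d21 d13 d31 d23 d32 i1 i2 i3 e1 e2 e3 w1 w2 w3).
Qed.
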